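(* Let $\mathsf{R}$ be a commutative ring, $n\ge 1$, $D$, $m$ positive integers, $0<\mu<1$, and $\ell\ge 1$. If a finite set $A \subseteq \mathsf{R}$ is an $(n,D,m,\mu)$-diversifying set, then $A^\ell \subseteq \mathsf{R}^\ell$ is an $(n,D,m,\mu^\ell)$-diversifying set, where addition and multiplication in $\mathsf{R}^\ell$ are componentwise (so a polynomial $h\in\mathsf{R}[x_1,\ldots,x_n]$ evaluated at $\boldsymbol\beta=(\boldsymbol\alpha_1,\ldots,\boldsymbol\alpha_\ell)$, with $\boldsymbol\alpha_k\in A^n$, gives $h(\boldsymbol\beta) = (h(\boldsymbol\alpha_1),\ldots,h(\boldsymbol\alpha_\ell))\in\mathsf{R}^\ell$, which is nonzero iff some component is nonzero).
   Context: Definition (diversifying set): For $n\ge 1$, bounds $D,m$ and $0<\mu<1$, a finite set $A$ of evaluation values is an $(n,D,m,\mu)$-diversifying set if for every set $\mathcal{H}\subseteq\mathsf{R}[x_1,\ldots,x_n]$ of nonzero polynomials with $\#\mathcal{H}\le m$ and each $h\in\mathcal{H}$ having max degree less than $D$ (every variable appears with exponent less than $D$), we have $\Pr_{\boldsymbol\alpha\in A^n}[h(\boldsymbol\alpha)\ne 0 \text{ for all } h\in\mathcal{H}] \ge 1-\mu$, where $\boldsymbol\alpha$ is chosen uniformly at random from $A^n$. *)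

(* Defs.v *)
From HB Require Import structures.
From mathcomp Require Import all_boot all_order all_algebra.
From mathcomp Require Import finmap mpoly.
Set Implicit Arguments. Unset Strict Implicit. Unset Printing Implicit Defensive.
Import Order.TTheory GRing.Theory Num.Theory.
Local Open Scope ring_scope.
Local Open Scope fset_scope.

Definition maxdeg_lt (R : nzRingType) (n D : nat) (h : {mpoly R[n]}) : Prop :=
  forall mo : 'X_{1..n}, mo \in msupp h -> forall i : 'I_n, (mo i < D)%N.

Definition prob (F : realFieldType) (T : finType) (P : pred T) : F :=
  (#|[set x | P x]|%:R / #|T|%:R).

(* Generic notion: evaluation values range over the finite type V (a finite
   set of evaluation values), a point is alpha in V^n chosen uniformly, and
   [ev h alpha] is the value h(alpha) in the ambient additive group S. *)
Definition diversifying_wrt (R : nzRingType) (n : nat) (V : finType)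
    (S : zmodType) (ev : {mpoly R[n]} -> ('I_n -> V) -> S)
    (D m : nat) (F : realFieldType) (mu : F) : Prop :=
  forall H : {fset {mpoly R[n]}},
    (#|` H| <= m)%N ->
    (forall h, h \in H -> h != 0 /\ maxdeg_lt D h) ->
    1 - mu <= @prob F {ffun 'I_n -> V}
                (fun alpha => [forall h : H, ev (val h) alpha != 0]).

Definition diversifying (R : comNzRingType) (n D m : nat)
    (F : realFieldType) (mu : F) (A : {fset R}) : Prop :=
  @diversifying_wrt R n A R
    (fun h alpha => h.@[fun i => val (alpha i)]) D m F mu.

(* An element of A^l is
   represented by b : {ffun 'I_l -> A} (i.e. the point (val (b k))_k of R^l),
   and for beta = (beta_1,...,beta_n) in (A^l)^n,
   h(beta) = (h(alpha_1),...,h(alpha_l)) in R^l = {ffun 'I_l -> R},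
   where alpha_k = (val (beta_i k))_i in A^n. *)
Definition eval_pow (R : comNzRingType) (A : {fset R}) (l n : nat)
    (h : {mpoly R[n]}) (beta : 'I_n -> {ffun 'I_l -> A}) : {ffun 'I_l -> R} :=
  [ffun k => h.@[fun i => val (beta i k)]].

Definition diversifying_pow (R : comNzRingType) (l n D m : nat)
    (F : realFieldType) (mu : F) (A : {fset R}) : Prop :=
  @diversifying_wrt R n {ffun 'I_l -> A} {ffun 'I_l -> R}
    (@eval_pow R A l n) D m F mu.

(* Main.v *)
Require Import Defs.
From HB Require Import structures.
From mathcomp Require Import all_boot all_order all_algebra.
From mathcomp Require Import finmap mpoly.
From mathcomp Require Import ring.
Import Order.TTheory GRing.Theory Num.Theory.
Local Open Scope ring_scope.

Lemma card_split (T : finType) (P : pred T) :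
  (#|[set x | P x]| + #|[set x | ~~ P x]|)%N = #|T|.
Proof.
rewrite -(cardsC [set x | P x]); congr (_ + _)%N.
by apply: eq_card => x; rewrite !inE.
Qed.

Lemma frac_split (F : fieldType) (g b : nat) :
  (g + b)%:R != 0 :> F -> g%:R / (g + b)%:R = 1 - b%:R / (g + b)%:R :> F.
Proof. by move=> h; rewrite natrD in h *; field. Qed.

Theorem lemma4p5 (R : comNzRingType) (n D m : nat) (F : realFieldType)
    (mu : F) (l : nat) (A : {fset R}) :
  (1 <= n)%N -> (0 < D)%N -> (0 < m)%N -> 0 < mu -> mu < 1 -> (1 <= l)%N ->
  diversifying n D m mu A ->
  diversifying_pow l n D m (mu ^+ l) A.
Proof.
move=> _ _ _ mu0 mu1 _ Hdiv H Hcard Hh.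
have hT := Hdiv H Hcard Hh.
rewrite /prob in hT *.
set T := ({ffun 'I_n -> A}) in hT *.
set G := (fun alpha : T => _) in hT.
set U := ({ffun 'I_n -> {ffun 'I_l -> A}}).
set Gp := (fun beta : U => _).
pose B := [set x : T | ~~ G x].
have c1 := @card_split T G.
have c4 := @card_split U Gp.
have c3 : #|U| = (#|T| ^ l)%N.
  by rewrite /U /T !card_ffun !card_ord -!expnM mulnC.
pose phi := fun beta : U => [ffun k : 'I_l => [ffun i : 'I_n => beta i k]] : {ffun 'I_l -> T}.
have phi_inj : injective phi.
  move=> b1 b2 e; apply/ffunP => i; apply/ffunP => k.
  have := congr1 (fun f : {ffun 'I_l -> T} => f k i) e; by rewrite /phi !ffunE.
have c2 : (#|[set x : U | ~~ Gp x]| <= #|B| ^ l)%N.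
  rewrite -(card_imset _ phi_inj).
  have -> : (#|B| ^ l = #|ffun_on_mem 'I_l (mem B)|)%N by rewrite (card_ffun_on 'I_l B) card_ord.
  apply: subset_leq_card; apply/subsetP => f /imsetP [beta].
  rewrite inE => /forallPn [h]; rewrite negbK => /eqP e ->.
  apply/ffun_onP => k; rewrite /B inE /G; apply/forallPn; exists h.
  rewrite negbK; apply/eqP.
  have := congr1 (fun f : {ffun 'I_l -> R} => f k) e; rewrite /eval_pow ffunE /= => E.
  rewrite (_ : (0 : {ffun 'I_l -> R}) k = 0) in E; last by rewrite ffunE.
  rewrite -E; apply: meval_eq => i; by rewrite /phi !ffunE.
set g := #|[set x | G x]| in c1 hT.
set b := #|[set x | ~~ G x]| in c1.
have bB : #|B| = b by [].
rewrite bB in c2.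
set gU := #|[set x | Gp x]| in c4 *.
set bU := #|[set x | ~~ Gp x]| in c4 c2.
have tpos : (0 < #|T|)%N.
  rewrite lt0n; apply/negP => /eqP t0.
  move: hT; rewrite t0 invr0 mulr0 subr_le0 => /(lt_le_trans mu1); by rewrite ltxx.
have tposR : 0 < (#|T|%:R : F) by rewrite ltr0n.
have upos : 0 < (#|U|%:R : F) by rewrite c3 ltr0n expn_gt0 tpos.
have hb : (b%:R / #|T|%:R : F) <= mu.
  have : (g%:R / #|T|%:R : F) = 1 - b%:R / #|T|%:R.
    by rewrite -c1 frac_split // c1 gt_eqF.
  move=> E; rewrite E in hT; move: hT; rewrite lerD2l lerN2 //.
have -> : (gU%:R / #|U|%:R : F) = 1 - bU%:R / #|U|%:R.
  by rewrite -c4 frac_split // c4 gt_eqF.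
rewrite lerD2l lerN2.
apply: (le_trans (y := (b%:R / #|T|%:R) ^+ l)).
  rewrite expr_div_n -natrX -natrX -c3.
  by rewrite ler_pM2r ?invr_gt0 // ler_nat.
apply: lerXn2r => //; rewrite nnegrE //.
  by rewrite divr_ge0 ?ler0n.
exact: (ltW mu0).
Qed.
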